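(* Let $\{X_n\}_{n\ge0}$ be a time-homogeneous discrete-time Markov chain with countably infinite state space $\mathcal{X}=\{x_i\}_{i\in\mathbb{N}}$ and transition probabilities $p_{ik}=\mathbb{P}(X_{n+1}=x_k\mid X_n=x_i)$. Let $\mathcal{A}_{\mathcal{X}}$ be a real separable Hilbert space with orthonormal basis $\{e_i\}_{i\in\mathbb{N}}$, and set $c_{ki}:=p_{ik}$. Then: (a) the product $v\cdot w:=\sum_{k=1}^\infty\big(\sum_{i=1}^\infty v_iw_ic_{ki}\big)e_k$ defines a Hilbert evolution algebra structure on $\mathcal{A}_{\mathcal{X}}$ with orthonormal natural basis $\{e_i\}$ and structure constants $c_{ki}$ (a Markov Hilbert evolution algebra); (b) if moreover there exist positive reals $\alpha_k,\beta_i$ ($i,k\in\mathbb{N}$) and $M_1,M_2>0$ with $\sum_{k=1}^\infty p_{ik}\alpha_k\le M_1\beta_i$ for all $i$ and $\sum_{i=1}^\infty p_{ik}\beta_i\le M_2\alpha_k$ for all $k$, then the evolution operator $C$ has domain $D(C)=\mathcal{A}_{\mathcal{X}}$, is bounded with $\|C\|\le(M_1M_2)^{1/2}$, and for every $n\ge1$ and $i\in\mathbb{N}$, $$C^n(e_i)=\sum_{k=1}^\infty p^{(n)}_{ik}e_k,\qquad p^{(n)}_{ik}:=\mathbb{P}(X_n=x_k\mid X_0=x_i).$$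
   Context: A (separable) Hilbert evolution algebra is a real or complex separable Hilbert space $(\mathcal{A},\langle\cdot,\cdot\rangle)$ equipped with a bilinear product $\cdot$ such that: (i) there exist an orthonormal basis $\{e_i\}_{i\in\mathbb{N}}$ (an orthonormal natural basis) and scalars $\{c_{ki}\}$ (structure constants) with $e_i\cdot e_i=\sum_{k=1}^\infty c_{ki}e_k$ and $e_i\cdot e_j=0$ for $i\neq j$; (ii) every left multiplication $L_v(w)=v\cdot w$ is a bounded operator on $\mathcal{A}$. The evolution operator is the linear operator $C:D(C)\to\mathcal{A}$ with domain $D(C)=\{v=\sum_iv_ie_i:\ \sum_{k=1}^\infty|\sum_{i=1}^\infty v_ic_{ki}|^2<\infty\}$ and $C(v)=\sum_{k=1}^\infty\big(\sum_{i=1}^\infty v_ic_{ki}\big)e_k$. *)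

(* Defs.v *)
From Stdlib Require Import Reals.
From Coquelicot Require Import Coquelicot.
Open Scope R_scope.

(* The real separable Hilbert space with orthonormal basis {e_i}_{i in N},
   realised concretely through coordinates as l^2(N): v = sum_i v_i e_i. *)
Definition l2 (v : nat -> R) : Prop := ex_series (fun i => (v i) ^ 2).
Definition l2norm (v : nat -> R) : R := sqrt (Series (fun i => (v i) ^ 2)).

Definition e (i : nat) : nat -> R := fun k => if Nat.eqb k i then 1 else 0.

Definition vadd (v w : nat -> R) : nat -> R := fun k => v k + w k.
Definition vscal (a : R) (v : nat -> R) : nat -> R := fun k => a * v k.

Definition is_Hilbert_evolution_algebra
  (prod : (nat -> R) -> (nat -> R) -> (nat -> R)) (c : nat -> nat -> R) : Prop :=
  (forall v w, l2 v -> l2 w -> l2 (prod v w)) /\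
  (forall a v v' w, l2 v -> l2 v' -> l2 w ->
      forall k, prod (vadd (vscal a v) v') w k = a * prod v w k + prod v' w k) /\
  (forall a v w w', l2 v -> l2 w -> l2 w' ->
      forall k, prod v (vadd (vscal a w) w') k = a * prod v w k + prod v w' k) /\
  (forall i, l2 (fun k => c k i) /\ forall k, prod (e i) (e i) k = c k i) /\
  (forall i j, i <> j -> forall k, prod (e i) (e j) k = 0) /\
  (forall v, l2 v -> exists K : R,
      forall w, l2 w -> l2norm (prod v w) <= K * l2norm w).

Definition evol (c : nat -> nat -> R) (v : nat -> R) : nat -> R :=
  fun k => Series (fun i => v i * c k i).

Definition in_dom_evol (c : nat -> nat -> R) (v : nat -> R) : Prop :=
  l2 v /\ (forall k, ex_series (fun i => v i * c k i)) /\ l2 (evol c v).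

(* Transition matrix of a time-homogeneous Markov chain on states {x_i}_{i in N}:
   p i k = P(X_{n+1} = x_k | X_n = x_i). *)
Definition stochastic_matrix (p : nat -> nat -> R) : Prop :=
  (forall i k, 0 <= p i k) /\ (forall i, is_series (fun k => p i k) 1).

(* n-step transition probabilities p^{(n)}_{ik} = P(X_n = x_k | X_0 = x_i),
   via the Chapman-Kolmogorov recursion. *)
Fixpoint nstep (p : nat -> nat -> R) (n : nat) : nat -> nat -> R :=
  match n with
  | O => fun i k => if Nat.eqb i k then 1 else 0
  | S m => fun i k => Series (fun j => nstep p m i j * p j k)
  end.

Definition markov_c (p : nat -> nat -> R) : nat -> nat -> R := fun k i => p i k.

Definition markov_prod (p : nat -> nat -> R) (v w : nat -> R) : nat -> R :=
  fun k => Series (fun i => v i * w i * markov_c p k i).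

(* Main.v *)
Require Import Defs.
From Stdlib Require Import Reals Lra Lia.
From Coquelicot Require Import Coquelicot.
Open Scope R_scope.

Lemma sum_n_S' (a : nat -> R) n : sum_n a (S n) = sum_n a n + a (S n).
Proof. rewrite sum_Sn. reflexivity. Qed.

Lemma sum_n_O' (a : nat -> R) : sum_n a 0 = a 0%nat.
Proof. apply sum_O. Qed.

Lemma sum_n_nonneg (a : nat -> R) : (forall n, 0 <= a n) -> forall N, 0 <= sum_n a N.
Proof. intros H N; induction N. rewrite sum_n_O'; auto. rewrite sum_n_S'; specialize (H (S N)); lra. Qed.

Lemma sum_n_le (a b : nat -> R) : (forall n, a n <= b n) -> forall N, sum_n a N <= sum_n b N.
Proof. intros H N; induction N. rewrite !sum_n_O'; auto. rewrite !sum_n_S'; specialize (H (S N)); lra. Qed.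

Lemma sum_n_term (a : nat -> R) : (forall n, 0 <= a n) -> forall N, a N <= sum_n a N.
Proof. intros H N; destruct N. rewrite sum_n_O'; lra. rewrite sum_n_S'.
 pose proof (sum_n_nonneg a H N); lra. Qed.

Lemma sum_n_le_Series (a : nat -> R) : (forall n, 0 <= a n) -> ex_series a ->
  forall N, sum_n a N <= Series a.
Proof. intros H E N. apply (is_lim_seq_incr_compare (sum_n a)).
 apply Series_correct; auto.
 intros n; rewrite sum_n_S'; specialize (H (S n)); lra. Qed.

Lemma term_le_Series (a : nat -> R) : (forall n, 0 <= a n) -> ex_series a ->
  forall N, a N <= Series a.
Proof. intros H E N. eapply Rle_trans. apply sum_n_term; auto. apply sum_n_le_Series; auto. Qed.

Lemma Series_nonneg (a : nat -> R) : (forall n, 0 <= a n) -> 0 <= Series a.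
Proof. intros H. unfold Series.
 assert (Rbar_le 0 (Lim_seq (sum_n a))).
 { replace (Finite 0) with (Lim_seq (fun _ => 0)) by apply Lim_seq_const.
   apply Lim_seq_le_loc. exists 0%nat; intros; apply sum_n_nonneg; auto. }
 destruct (Lim_seq (sum_n a)); simpl in *; lra. Qed.

Lemma bounded_series (a : nat -> R) (B : R) : (forall n, 0 <= a n) ->
  (forall N, sum_n a N <= B) -> ex_series a /\ Series a <= B.
Proof. intros H HB.
 assert (F : ex_finite_lim_seq (sum_n a)).
 { apply ex_finite_lim_seq_incr with B; auto.
   intros n; rewrite sum_n_S'; specialize (H (S n)); lra. }
 destruct F as [l Hl].
 assert (E : ex_series a) by (exists l; exact Hl).
 split; auto.
 assert (Rbar_le (Lim_seq (sum_n a)) B).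
 { replace (Finite B) with (Lim_seq (fun _ => B)) by apply Lim_seq_const.
   apply Lim_seq_le_loc. exists 0%nat; intros; auto. }
 pose proof (sum_n_nonneg a H 0); pose proof (HB 0%nat).
 unfold Series. destruct (Lim_seq (sum_n a)); simpl in *; try lra; contradiction.
Qed.

Lemma Series_sum_n (a : nat -> nat -> R) : (forall j, ex_series (a j)) ->
  forall K, ex_series (fun i => sum_n (fun j => a j i) K) /\
    Series (fun i => sum_n (fun j => a j i) K) = sum_n (fun j => Series (a j)) K.
Proof. intros H K; induction K as [|K [IE IS]].
 - split. apply ex_series_ext with (a 0%nat). intros; rewrite sum_n_O'; auto. auto.
   rewrite sum_n_O'. apply Series_ext; intros; rewrite sum_n_O'; auto.
 - assert (E2 : ex_series (fun i => sum_n (fun j => a j i) K + a (S K) i)).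
   { apply (ex_series_plus (fun i => sum_n (fun j => a j i) K) (a (S K))); auto. }
   split.
   + apply ex_series_ext with (2 := E2). intros; rewrite sum_n_S'; auto.
   + rewrite sum_n_S'. rewrite <- IS. rewrite <- Series_plus; auto.
     apply Series_ext; intros; rewrite sum_n_S'; auto.
Qed.

Lemma tonelli (a : nat -> nat -> R) : (forall i k, 0 <= a i k) ->
  (forall i, ex_series (fun k => a i k)) ->
  ex_series (fun i => Series (fun k => a i k)) ->
  (forall k, ex_series (fun i => a i k)) /\
  ex_series (fun k => Series (fun i => a i k)) /\
  Series (fun k => Series (fun i => a i k)) <= Series (fun i => Series (fun k => a i k)).
Proof. intros Hn Hr HS.
 assert (RS : forall i, 0 <= Series (fun k => a i k)) by (intros; apply Series_nonneg; auto).
 assert (C : forall k, ex_series (fun i => a i k)).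
 { intros k. apply (bounded_series _ (Series (fun i => Series (fun k => a i k)))); auto.
   intros N. eapply Rle_trans. apply sum_n_le. intros i. apply (term_le_Series (fun k => a i k)); auto.
   apply sum_n_le_Series; auto. }
 split; auto.
 apply bounded_series.
 intros; apply Series_nonneg; auto.
 intros K. destruct (Series_sum_n (fun k i => a i k) C K) as [E1 E2].
 rewrite <- E2. apply Series_le; auto.
 intros i; split. apply sum_n_nonneg; auto. apply (sum_n_le_Series (fun k => a i k)); auto.
Qed.

Lemma exs_plus (a b : nat -> R) : ex_series a -> ex_series b -> ex_series (fun n => a n + b n).
Proof. intros; apply (ex_series_plus a b); auto. Qed.
Lemma exs_scal (c : R) (a : nat -> R) : ex_series a -> ex_series (fun n => c * a n).
Proof. intros; apply (ex_series_scal_l c a); auto. Qed.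
Lemma exs_le (a b : nat -> R) : (forall n, Rabs (a n) <= b n) -> ex_series b -> ex_series a.
Proof. intros; apply (ex_series_le a b); auto. Qed.

Lemma series_CS (f g h : nat -> R) : (forall i, 0 <= f i) -> (forall i, 0 <= g i) ->
  (forall i, 0 <= h i) -> (forall i, f i ^ 2 <= g i * h i) ->
  ex_series g -> ex_series h ->
  ex_series f /\ (Series f) ^ 2 <= Series g * Series h.
Proof. intros Hf Hg Hh Hfgh Eg Eh.
 assert (key : forall t, 0 < t -> forall i, f i <= (t * g i + / t * h i) / 2).
 { intros t Ht i. specialize (Hf i); specialize (Hg i); specialize (Hh i); specialize (Hfgh i).
   assert (0 <= t * g i + / t * h i) by (assert (0 < /t) by (apply Rinv_0_lt_compat; lra); nra).
   assert (f i * f i <= ((t * g i + / t * h i) / 2) * ((t * g i + / t * h i) / 2)).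
   { assert (t * g i * (/ t * h i) = g i * h i) by (field; lra).
     set (a := t * g i) in *. set (b := / t * h i) in *.
     assert (f i * f i <= g i * h i) by (replace (f i * f i) with (f i ^ 2) by ring; lra).
     assert (E : (a + b) / 2 * ((a + b) / 2) - a * b = (a - b) * (a - b) / 4) by field.
     assert (0 <= (a - b) * (a - b)) by apply Rle_0_sqr. lra. }
   destruct (Rle_dec (f i) ((t * g i + / t * h i) / 2)) as [?|Hc]; auto.
   apply Rnot_le_lt in Hc. exfalso.
   assert ((t * g i + / t * h i) / 2 * ((t * g i + / t * h i) / 2) < f i * f i).
   { apply Rle_lt_trans with ((t * g i + / t * h i) / 2 * f i).
     apply Rmult_le_compat_l; lra. apply Rmult_lt_compat_r; lra. }
   lra. }
 assert (Ef : ex_series f).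
 { apply (exs_le f (fun i => / 2 * (g i + h i))).
   intros i; rewrite Rabs_pos_eq by auto. 
   replace (/ 2 * (g i + h i)) with ((1 * g i + / 1 * h i) / 2) by field. apply key; lra.
   apply exs_scal, exs_plus; auto. }
 split; auto.
 assert (B : forall t, 0 < t -> Series f <= (t * Series g + / t * Series h) / 2).
 { intros t Ht. rewrite <- !Series_scal_l. 
   assert (Series (fun i => (t * g i + / t * h i) / 2) = (Series (fun n => t * g n) + Series (fun n => / t * h n)) / 2).
   { rewrite <- Series_plus. unfold Rdiv. rewrite <- Series_scal_r. auto.
     apply exs_scal; auto. apply exs_scal; auto. }
   rewrite <- H. apply Series_le. intros; split; auto.
   apply ex_series_ext with (fun i => / 2 * (t * g i + / t * h i)).
   intros; unfold Rdiv; apply Rmult_comm.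
   apply exs_scal, exs_plus; apply exs_scal; auto. }
 pose proof (Series_nonneg f Hf) as F0. pose proof (Series_nonneg g Hg) as G0.
 pose proof (Series_nonneg h Hh) as H0.
 set (S := Series f) in *. set (A := Series g) in *. set (Bh := Series h) in *.
 destruct (Req_dec S 0) as [S0|S0]. rewrite S0; nra.
 destruct (Req_dec A 0) as [A0|A0].
 - exfalso. specialize (B ((Bh + 1) / S)).
   assert (0 < (Bh+1)/S) by (apply Rdiv_lt_0_compat; lra).
   specialize (B H). rewrite A0 in B.
   assert (/ ((Bh + 1) / S) * Bh = S * Bh / (Bh + 1)) by (field; lra).
   rewrite H1 in B.
   assert (S * Bh / (Bh + 1) < S).
   { apply Rmult_lt_reg_r with (Bh + 1). lra. unfold Rdiv. rewrite Rmult_assoc, Rinv_l by lra. nra. }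
   lra.
 - specialize (B (S / A)). assert (0 < S / A) by (apply Rdiv_lt_0_compat; lra).
   specialize (B H).
   assert (S / A * A = S) by (field; lra).
   assert (/ (S / A) * Bh = A * Bh / S) by (field; lra).
   rewrite H1, H2 in B.
   assert (S <= A * Bh / S) by lra.
   apply Rmult_le_compat_r with (r := S) in H3; [|lra].
   unfold Rdiv in H3. rewrite Rmult_assoc, Rinv_l in H3 by lra. nra.
Qed.

Lemma Series_zero : Series (fun _ => 0) = 0.
Proof. rewrite (Series_ext _ (fun n => 0 * 0)) by (intros; symmetry; apply Rmult_0_l).
 rewrite Series_scal_l. ring. Qed.

Lemma sum_n_delta (i : nat) (f : nat -> R) N :
  @eq R (sum_n (fun j => if Nat.eqb j i then f j else 0) N) (if Nat.leb i N then f i else 0).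
Proof. induction N.
 - rewrite sum_n_O'. destruct i; simpl; auto.
 - rewrite sum_n_S', IHN. destruct (Nat.eqb (S N) i) eqn:E.
   + apply Nat.eqb_eq in E; subst. rewrite Nat.leb_refl.
     assert (Nat.leb (S N) N = false) by (apply Nat.leb_gt; lia). rewrite H; ring.
   + destruct (Nat.leb i N) eqn:E1.
     * apply Nat.leb_le in E1. assert (Nat.leb i (S N) = true) by (apply Nat.leb_le; lia).
       rewrite H; ring.
     * apply Nat.leb_gt in E1. apply Nat.eqb_neq in E.
       assert (Nat.leb i (S N) = false) by (apply Nat.leb_gt; lia). rewrite H; ring.
Qed.

Lemma Series_delta (i : nat) (f : nat -> R) :
  Series (fun j => if Nat.eqb j i then f j else 0) = f i.
Proof. unfold Series.
 rewrite (Lim_seq_ext_loc _ (fun _ => f i)). rewrite Lim_seq_const. reflexivity.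
 exists i. intros N HN. rewrite sum_n_delta. apply Nat.leb_le in HN. rewrite HN; auto.
Qed.

Lemma abs_prod_le (x y q : R) : 0 <= q <= 1 -> Rabs (x * y * q) <= / 2 * (x ^ 2 + y ^ 2).
Proof. intros Hq. rewrite !Rabs_mult, (Rabs_pos_eq q) by lra.
 rewrite <- (pow2_abs x), <- (pow2_abs y).
 pose proof (Rabs_pos x); pose proof (Rabs_pos y).
 assert (Rabs x * Rabs y * q <= Rabs x * Rabs y).
 { rewrite <- (Rmult_1_r (Rabs x * Rabs y)) at 2. apply Rmult_le_compat_l; nra. }
 assert (0 <= (Rabs x - Rabs y) ^ 2) by apply pow2_ge_0. nra.
Qed.

Lemma p_facts (p : nat -> nat -> R) : stochastic_matrix p ->
  (forall i k, 0 <= p i k <= 1) /\ (forall i, ex_series (fun k => p i k)) /\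
  (forall i, Series (fun k => p i k) = 1).
Proof. intros [Hn Hr].
 assert (E : forall i, ex_series (fun k => p i k)) by (intros i; exists 1; apply Hr).
 assert (S1 : forall i, Series (fun k => p i k) = 1) by (intros; apply is_series_unique; apply Hr).
 repeat split; auto.
 rewrite <- (S1 i). apply (term_le_Series (fun k => p i k)); auto.
Qed.

Lemma prod_bound (p : nat -> nat -> R) (v w : nat -> R) : stochastic_matrix p ->
  l2 v -> l2 w ->
  (forall k, ex_series (fun i => v i * w i * markov_c p k i)) /\
  ex_series (fun k => markov_prod p v w k ^ 2) /\
  Series (fun k => markov_prod p v w k ^ 2) <= Series (fun i => v i ^ 2) * Series (fun i => w i ^ 2).
Proof. intros Hp Hv Hw. destruct (p_facts p Hp) as [P01 [PE PS]].
 unfold l2 in *. unfold markov_prod, markov_c.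
 set (u := fun i => Rabs (v i * w i)).
 assert (U0 : forall i, 0 <= u i) by (intros; apply Rabs_pos).
 assert (Eu : ex_series u).
 { apply (exs_le u (fun i => / 2 * (v i ^ 2 + w i ^ 2))).
   intros i; unfold u; rewrite Rabs_Rabsolu. rewrite <- (Rmult_1_r (v i * w i)).
   apply abs_prod_le; lra. apply exs_scal, exs_plus; auto. }
 destruct (series_CS u (fun i => v i ^ 2) (fun i => w i ^ 2)) as [_ CS]; auto.
 intros; apply pow2_ge_0. intros; apply pow2_ge_0.
 intros i; unfold u. rewrite pow2_abs. right; ring.
 set (U := Series u) in *.
 destruct (tonelli (fun i k => u i * p i k)) as [Ecol [Es Ts]].
 intros; apply Rmult_le_pos; auto; apply P01.
 intros i; apply exs_scal; auto.
 apply ex_series_ext with u; auto. intros i. rewrite Series_scal_l, PS. symmetry; apply Rmult_1_r.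
 assert (RW : Series (fun i => Series (fun k => u i * p i k)) = Series u).
 { apply Series_ext; intros i; rewrite Series_scal_l, PS; ring. }
 rewrite RW in Ts.
 fold U in Ts.
 set (s := fun k => Series (fun i => u i * p i k)) in *.
 assert (s0 : forall k, 0 <= s k).
 { intros; apply Series_nonneg; intros; apply Rmult_le_pos; auto; apply P01. }
 assert (sU : forall k, s k <= U).
 { intros k. apply Series_le; auto. intros i; split. apply Rmult_le_pos; auto; apply P01.
   rewrite <- (Rmult_1_r (u i)) at 2. apply Rmult_le_compat_l; auto; apply P01. }
 assert (Eabs : forall k, ex_series (fun i => Rabs (v i * w i * p i k))).
 { intros k. apply ex_series_ext with (2 := Ecol k). intros i. unfold u.
   rewrite (Rabs_mult (v i * w i) (p i k)), (Rabs_pos_eq (p i k)) by apply P01. reflexivity. }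
 assert (Ex : forall k, ex_series (fun i => v i * w i * p i k)).
 { intros k; apply ex_series_Rabs; auto. }
 assert (Ab : forall k, Rabs (Series (fun i => v i * w i * p i k)) <= s k).
 { intros k. eapply Rle_trans. apply Series_Rabs; auto. right. apply Series_ext.
   intros i; unfold u. rewrite (Rabs_mult (v i * w i) (p i k)), (Rabs_pos_eq (p i k)) by apply P01. reflexivity. }
 assert (Sq : forall k, (Series (fun i => v i * w i * p i k)) ^ 2 <= U * s k).
 { intros k. rewrite <- pow2_abs. specialize (Ab k). specialize (sU k). specialize (s0 k).
   pose proof (Rabs_pos (Series (fun i => v i * w i * p i k))). simpl. nra. }
 assert (Ebig : ex_series (fun k => U * s k)) by (apply exs_scal; auto).
 split; auto. split.
 - apply (exs_le _ (fun k => U * s k)); auto. intros k. rewrite Rabs_pos_eq by apply pow2_ge_0. auto.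
 - eapply Rle_trans. apply (Series_le _ (fun k => U * s k)); auto. intros; split; auto. apply pow2_ge_0.
   rewrite Series_scal_l. eapply Rle_trans; [|apply CS].
   pose proof (Series_nonneg u U0). fold U in H. simpl. nra.
Qed.

Lemma evol_bound (p : nat -> nat -> R) (alpha beta : nat -> R) (M1 M2 : R) (v : nat -> R) :
  stochastic_matrix p ->
  (forall k, 0 < alpha k) -> (forall i, 0 < beta i) -> 0 < M1 -> 0 < M2 ->
  (forall i, ex_series (fun k => p i k * alpha k) /\
             Series (fun k => p i k * alpha k) <= M1 * beta i) ->
  (forall k, ex_series (fun i => p i k * beta i) /\
             Series (fun i => p i k * beta i) <= M2 * alpha k) ->
  l2 v ->
  (forall k, ex_series (fun i => v i * markov_c p k i)) /\
  ex_series (fun k => evol (markov_c p) v k ^ 2) /\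
  Series (fun k => evol (markov_c p) v k ^ 2) <= M1 * M2 * Series (fun i => v i ^ 2).
Proof. intros Hp Ha Hb HM1 HM2 Hra Hcb Hv.
 destruct (p_facts p Hp) as [P01 [PE PS]].
 unfold l2 in *. unfold evol, markov_c.
 assert (pab : forall i k, p i k * alpha k <= M1 * beta i).
 { intros i k. destruct (Hra i) as [E1 E2]. eapply Rle_trans; [|apply E2].
   apply (term_le_Series (fun k => p i k * alpha k)); auto.
   intros; apply Rmult_le_pos. apply P01. left; apply Ha. }
 set (g := fun k i => v i ^ 2 * p i k / beta i).
 assert (g0 : forall k i, 0 <= g k i).
 { intros; unfold g. apply Rmult_le_pos. apply Rmult_le_pos. apply pow2_ge_0. apply P01.
   left; apply Rinv_0_lt_compat; auto. }
 assert (gle : forall k i, g k i <= M1 / alpha k * v i ^ 2).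
 { intros k i. unfold g. specialize (pab i k). specialize (Ha k). specialize (Hb i).
   assert (p i k / beta i <= M1 / alpha k).
   { apply Rmult_le_reg_r with (alpha k * beta i). nra.
     replace (p i k / beta i * (alpha k * beta i)) with (p i k * alpha k) by (field; lra).
     replace (M1 / alpha k * (alpha k * beta i)) with (M1 * beta i) by (field; lra). auto. }
   pose proof (pow2_ge_0 (v i)). unfold Rdiv in *. nra. }
 assert (Eg : forall k, ex_series (g k)).
 { intros k. apply (exs_le _ (fun i => M1 / alpha k * v i ^ 2)).
   intros i. rewrite Rabs_pos_eq by auto. auto. apply exs_scal; auto. }
 assert (CSk : forall k, ex_series (fun i => Rabs (v i) * p i k) /\
   (Series (fun i => Rabs (v i) * p i k)) ^ 2 <= Series (g k) * Series (fun i => p i k * beta i)).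
 { intros k. apply series_CS; auto.
   intros; apply Rmult_le_pos. apply Rabs_pos. apply P01.
   intros; apply Rmult_le_pos. apply P01. left; apply Hb.
   intros i. unfold g. rewrite <- (pow2_abs (v i)). specialize (Hb i). right. field. lra.
   apply Hcb. }
 assert (Eabs : forall k, ex_series (fun i => Rabs (v i * p i k))).
 { intros k. apply ex_series_ext with (2 := proj1 (CSk k)). intros i.
   rewrite Rabs_mult, (Rabs_pos_eq (p i k)) by apply P01. reflexivity. }
 assert (Ex : forall k, ex_series (fun i => v i * p i k)) by (intros; apply ex_series_Rabs; auto).
 set (col := fun k => alpha k * Series (g k)).
 assert (Sq : forall k, (Series (fun i => v i * p i k)) ^ 2 <= M2 * col k).
 { intros k. destruct (CSk k) as [_ C]. 
   assert (A1 : Rabs (Series (fun i => v i * p i k)) <= Series (fun i => Rabs (v i) * p i k)).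
   { eapply Rle_trans. apply Series_Rabs; auto. right. apply Series_ext. intros i.
     rewrite Rabs_mult, (Rabs_pos_eq (p i k)) by apply P01. reflexivity. }
   pose proof (Rabs_pos (Series (fun i => v i * p i k))).
   assert (G0 : 0 <= Series (g k)) by (apply Series_nonneg; auto).
   assert (Hk := proj2 (Hcb k)).
   rewrite <- pow2_abs. unfold col.
   apply Rle_trans with (Series (fun i => Rabs (v i) * p i k) ^ 2).
   apply pow_incr; auto.
   eapply Rle_trans; [apply C|]. 
   replace (M2 * (alpha k * Series (g k))) with (Series (g k) * (M2 * alpha k)) by ring.
   apply Rmult_le_compat_l; auto. }
 destruct (tonelli (fun i k => v i ^ 2 / beta i * (p i k * alpha k))) as [Ecol [Es Ts]].
 - intros i k. apply Rmult_le_pos. unfold Rdiv. apply Rmult_le_pos. apply pow2_ge_0.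
   left; apply Rinv_0_lt_compat; auto. apply Rmult_le_pos. apply P01. left; apply Ha.
 - intros i. apply exs_scal. apply Hra.
 - apply (exs_le _ (fun i => M1 * v i ^ 2)).
   + intros i. rewrite Series_scal_l. specialize (Hb i).
     assert (0 <= v i ^ 2 / beta i) by (unfold Rdiv; apply Rmult_le_pos; [apply pow2_ge_0| left; apply Rinv_0_lt_compat; auto]).
     assert (0 <= Series (fun k => p i k * alpha k)).
     { apply Series_nonneg. intros; apply Rmult_le_pos. apply P01. left; apply Ha. }
     rewrite Rabs_pos_eq by (apply Rmult_le_pos; auto).
     eapply Rle_trans. apply Rmult_le_compat_l; auto. apply (Hra i).
     right. field. lra.
   + apply exs_scal; auto.
 - assert (colE : forall k, Series (fun i => v i ^ 2 / beta i * (p i k * alpha k)) = col k).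
   { intros k. unfold col. rewrite <- Series_scal_l. apply Series_ext. intros i.
     unfold g. field. specialize (Hb i). lra. }
   assert (Ecol' : ex_series col).
   { apply ex_series_ext with (2 := Es). intros; apply colE. }
   assert (Ts' : Series col <= M1 * Series (fun i => v i ^ 2)).
   { rewrite <- (Series_ext _ _ colE). eapply Rle_trans. apply Ts.
     rewrite <- Series_scal_l. apply Series_le.
     2: { apply exs_scal; auto. }
     intros i. rewrite Series_scal_l. specialize (Hb i).
     assert (0 <= v i ^ 2 / beta i) by (unfold Rdiv; apply Rmult_le_pos; [apply pow2_ge_0| left; apply Rinv_0_lt_compat; auto]).
     assert (0 <= Series (fun k => p i k * alpha k)).
     { apply Series_nonneg. intros; apply Rmult_le_pos. apply P01. left; apply Ha. }
     split. apply Rmult_le_pos; auto.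
     eapply Rle_trans. apply Rmult_le_compat_l; auto. apply (Hra i).
     right. field. lra. }
   split; auto. split.
   + apply (exs_le _ (fun k => M2 * col k)). intros k. rewrite Rabs_pos_eq by apply pow2_ge_0. auto.
     apply exs_scal; auto.
   + eapply Rle_trans. apply (Series_le _ (fun k => M2 * col k)).
     intros; split; [apply pow2_ge_0|auto]. apply exs_scal; auto.
     rewrite Series_scal_l. replace (M1 * M2 * Series (fun i => v i ^ 2)) with (M2 * (M1 * Series (fun i => v i ^ 2))) by ring.
     apply Rmult_le_compat_l; lra.
Qed.

Theorem mainTheorem4 (p : nat -> nat -> R) (Hp : stochastic_matrix p) :
  (* (a) *)
  ((forall v w, l2 v -> l2 w -> forall k,
       ex_series (fun i => v i * w i * markov_c p k i)) /\
   is_Hilbert_evolution_algebra (markov_prod p) (markov_c p)) /\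
  (* (b) *)
  (forall (alpha beta : nat -> R) (M1 M2 : R),
     (forall k, 0 < alpha k) -> (forall i, 0 < beta i) -> 0 < M1 -> 0 < M2 ->
     (forall i, ex_series (fun k => p i k * alpha k) /\
                Series (fun k => p i k * alpha k) <= M1 * beta i) ->
     (forall k, ex_series (fun i => p i k * beta i) /\
                Series (fun i => p i k * beta i) <= M2 * alpha k) ->
     (forall v, in_dom_evol (markov_c p) v <-> l2 v) /\
     (forall v, l2 v ->
        l2norm (evol (markov_c p) v) <= sqrt (M1 * M2) * l2norm v) /\
     (forall (n i : nat), (1 <= n)%nat -> forall k,
        Nat.iter n (evol (markov_c p)) (e i) k = nstep p n i k)).
Proof.
 destruct (p_facts p Hp) as [P01 [PE PS]].
 split.
 - split.
   { intros v w Hv Hw. apply (prod_bound p v w Hp Hv Hw). }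
   unfold is_Hilbert_evolution_algebra. split; [|split; [|split; [|split; [|split]]]].
   + intros v w Hv Hw. apply (prod_bound p v w Hp Hv Hw).
   + intros a v v' w Hv Hv' Hw k. unfold markov_prod, vadd, vscal.
     destruct (prod_bound p v w Hp Hv Hw) as [E1 _].
     destruct (prod_bound p v' w Hp Hv' Hw) as [E2 _].
     rewrite <- Series_scal_l, <- Series_plus.
     apply Series_ext; intros; ring. apply exs_scal; auto. auto.
   + intros a v w w' Hv Hw Hw' k. unfold markov_prod, vadd, vscal.
     destruct (prod_bound p v w Hp Hv Hw) as [E1 _].
     destruct (prod_bound p v w' Hp Hv Hw') as [E2 _].
     rewrite <- Series_scal_l, <- Series_plus.
     apply Series_ext; intros; ring. apply exs_scal; auto. auto.
   + intros i. split.
     * unfold l2, markov_c. apply (exs_le _ (fun k => p i k)); auto.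
       intros k. rewrite Rabs_pos_eq by apply pow2_ge_0. destruct (P01 i k). simpl. nra.
     * intros k. unfold markov_prod, markov_c, e.
       rewrite <- (Series_delta i (fun j => p j k)). apply Series_ext. intros j.
       destruct (Nat.eqb j i); ring.
   + intros i j Hij k. unfold markov_prod, e.
     rewrite <- Series_zero at 1. apply Series_ext. intros l.
     destruct (Nat.eqb l i) eqn:E1; destruct (Nat.eqb l j) eqn:E2; try ring.
     apply Nat.eqb_eq in E1; apply Nat.eqb_eq in E2; subst; contradiction.
   + intros v Hv. exists (l2norm v). intros w Hw.
     destruct (prod_bound p v w Hp Hv Hw) as [_ [_ B]].
     unfold l2norm. rewrite <- sqrt_mult_alt.
     apply sqrt_le_1_alt; auto.
     apply Series_nonneg; intros; apply pow2_ge_0.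
 - intros alpha beta M1 M2 Ha Hb HM1 HM2 Hra Hcb. split; [|split].
   + intros v; split. intros [H _]; auto.
     intros Hv. destruct (evol_bound p alpha beta M1 M2 v Hp Ha Hb HM1 HM2 Hra Hcb Hv) as [A [B _]].
     split; auto.
   + intros v Hv. destruct (evol_bound p alpha beta M1 M2 v Hp Ha Hb HM1 HM2 Hra Hcb Hv) as [_ [_ C]].
     unfold l2norm. rewrite <- sqrt_mult_alt by (apply Rmult_le_pos; lra).
     apply sqrt_le_1_alt. rewrite Rmult_assoc in C |- *. auto.
   + intros n i _. induction n; intros k.
     * simpl. unfold e. rewrite Nat.eqb_sym; reflexivity.
     * simpl. unfold evol, markov_c. apply Series_ext. intros j. rewrite IHn. reflexivity.
Qed.
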